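(* Let $R$ be a lattice diagram of a knot or link. (1) If two problem crossings of $R$ are adjacent in the crossing graph $C(R)$ but are not adjacent in the problem crossing graph $PC(R)$, then neither is a bad neighbor of the other, and they have the same crossing type. (2) If $R$ does not have a Celtic configuration, then $PC(R)$ has every vertex of degree at most $2$, is deleted-square free, and every connected component of $PC(R)$ that is a cycle has a vertex that is not a corner of $PC(R)$.
   Context: A lattice diagram of a knot or link is a knot or link diagram (with over/under information at finitely many transverse double points, the crossings) contained in the $\mathbb{Z}^2$ lattice (vertices the integer points, edges the unit segments parallel to the axes) with all crossings at lattice vertices. At a crossing $c$, the $x$-strand (resp. $y$-strand) is the union of the two horizontal (resp. vertical) lattice edges of $R$ with endpoint $c$; $c$ is an $x$-crossing (resp. $y$-crossing) if the over-strand is the $x$-strand (resp. $y$-strand); this is its crossing type. The crossing graph $C(R)$ is the subgraph of the $\mathbb{Z}^2$ lattice with a vertex at each crossing of $R$ and an edge between any two crossings at lattice distance $1$. In a subgraph $G$ of the $\mathbb{Z}^2$ lattice, two vertices are adjacent if joined by an edge of $G$; two neighbors $a,b$ of a vertex $v$ are nearby neighbors if edges $va$, $vb$ are perpendicular and opposing neighbors if parallel; $v$ is a corner of $G$ if it has exactly two neighbors in $G$ and they are nearby neighbors; $G$ is deleted-square free if it does not contain three edges of a single unit square of the $\mathbb{Z}^2$ lattice. A crossing $c$ is a problem crossing if it has a pair of nearby neighbors in $C(R)$ both of crossing type opposite to that of $c$; any crossing in such a pair is a bad neighbor of $c$. The problem crossing graph $PC(R)$ is the subgraph of $C(R)$ whose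 vertices are the problem crossings and with an edge between two problem crossings that are bad neighbors of each other. A Celtic configuration is a set of four crossings at the four vertices of a unit square of the $\mathbb{Z}^2$ lattice such that any two of them joined by a side of the square have opposite crossing types. *)

(* Defs.v *)
From Stdlib Require Import ZArith Lia.
Open Scope Z_scope.

Definition pt := (Z * Z)%type.
Definition padd (p q : pt) : pt := (fst p + fst q, snd p + snd q).

(* A lattice diagram: a finite set of unit lattice edges (hedge p = the
   horizontal edge from p to p+(1,0), vedge p = the vertical edge from p to
   p+(0,1)), every lattice vertex having degree 0, 2 or 4 (the diagram is a
   union of closed lattice curves; degree-4 vertices are exactly the
   crossings, i.e. transverse double points), together with crossing
   information: xover c = true iff the over-strand at c is the x-strand
   (meaningful only at crossings). *)
Definition edge_right (h : pt -> bool) (p : pt) := h p.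
Definition edge_left (h : pt -> bool) (p : pt) := h (fst p - 1, snd p).
Definition edge_up (v : pt -> bool) (p : pt) := v p.
Definition edge_down (v : pt -> bool) (p : pt) := v (fst p, snd p - 1).

Definition vdeg (h v : pt -> bool) (p : pt) : nat :=
  (Nat.b2n (edge_right h p) + Nat.b2n (edge_left h p)
   + Nat.b2n (edge_up v p) + Nat.b2n (edge_down v p))%nat.

Record lattice_diagram := {
  hedge : pt -> bool;
  vedge : pt -> bool;
  xover : pt -> bool;
  ld_finite : exists N : Z, forall p : pt, (hedge p = true \/ vedge p = true) ->
      Z.abs (fst p) <= N /\ Z.abs (snd p) <= N;
  ld_nonempty : exists p : pt, hedge p = true \/ vedge p = true;
  ld_degree : forall p : pt, vdeg hedge vedge p = 0%nat \/
      vdeg hedge vedge p = 2%nat \/ vdeg hedge vedge p = 4%nat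
}.

Definition crossing (R : lattice_diagram) (c : pt) : Prop :=
  vdeg (hedge R) (vedge R) c = 4%nat.

Definition opp_type (R : lattice_diagram) (a b : pt) : Prop :=
  xover R a <> xover R b.

Definition unit_vec (d : pt) : Prop :=
  d = (1, 0) \/ d = (0, 1) \/ d = (-1, 0) \/ d = (0, -1).
Definition perp (d1 d2 : pt) : Prop := fst d1 * fst d2 + snd d1 * snd d2 = 0.

Definition cadj (R : lattice_diagram) (a b : pt) : Prop :=
  crossing R a /\ crossing R b /\ exists d, unit_vec d /\ b = padd a d.

Definition bad_pair (R : lattice_diagram) (c b1 b2 : pt) : Prop :=
  exists d1 d2, unit_vec d1 /\ unit_vec d2 /\ perp d1 d2 /\
    b1 = padd c d1 /\ b2 = padd c d2 /\
    cadj R c b1 /\ cadj R c b2 /\ opp_type R c b1 /\ opp_type R c b2.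

Definition problem (R : lattice_diagram) (c : pt) : Prop :=
  crossing R c /\ exists b1 b2, bad_pair R c b1 b2.

Definition bad_nbr (R : lattice_diagram) (c b : pt) : Prop :=
  problem R c /\ exists b', bad_pair R c b b' \/ bad_pair R c b' b.

Definition pcadj (R : lattice_diagram) (a b : pt) : Prop :=
  problem R a /\ problem R b /\ bad_nbr R a b /\ bad_nbr R b a.

Definition celtic (R : lattice_diagram) : Prop :=
  exists p : pt,
    let p1 := padd p (1, 0) in let p2 := padd p (1, 1) in
    let p3 := padd p (0, 1) in
    crossing R p /\ crossing R p1 /\ crossing R p2 /\ crossing R p3 /\
    opp_type R p p1 /\ opp_type R p1 p2 /\ opp_type R p2 p3 /\ opp_type R p3 p.

Definition pc_maxdeg2 (R : lattice_diagram) : Prop :=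
  forall v u1 u2 u3, pcadj R v u1 -> pcadj R v u2 -> pcadj R v u3 ->
    u1 = u2 \/ u1 = u3 \/ u2 = u3.

Definition pc_deleted_square_free (R : lattice_diagram) : Prop :=
  forall p : pt,
    let a := p in let b := padd p (1, 0) in let c := padd p (1, 1) in
    let d := padd p (0, 1) in
    ~ ((pcadj R a b /\ pcadj R b c /\ pcadj R c d) \/
       (pcadj R b c /\ pcadj R c d /\ pcadj R d a) \/
       (pcadj R c d /\ pcadj R d a /\ pcadj R a b) \/
       (pcadj R d a /\ pcadj R a b /\ pcadj R b c)).

Definition pc_corner (R : lattice_diagram) (v : pt) : Prop :=
  exists d1 d2, unit_vec d1 /\ unit_vec d2 /\ perp d1 d2 /\
    pcadj R v (padd v d1) /\ pcadj R v (padd v d2) /\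
    forall w, pcadj R v w -> w = padd v d1 \/ w = padd v d2.

(* f 0, ..., f (k-1) are the (distinct) vertices of a connected component of
   PC(R) which is a cycle graph (with edges f i -- f ((i+1) mod k)). *)
Definition pc_cycle_component (R : lattice_diagram) (k : nat) (f : nat -> pt)
  : Prop :=
  (3 <= k)%nat /\
  (forall i j, (i < k)%nat -> (j < k)%nat -> f i = f j -> i = j) /\
  (forall i, (i < k)%nat -> problem R (f i)) /\
  (forall i, (i < k)%nat -> pcadj R (f i) (f (Nat.modulo (S i) k))) /\
  (forall i w, (i < k)%nat -> pcadj R (f i) w -> exists j, (j < k)%nat /\ w = f j) /\
  (forall i j, (i < k)%nat -> (j < k)%nat -> pcadj R (f i) (f j) ->
     j = Nat.modulo (S i) k \/ i = Nat.modulo (S j) k).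

(* Main.v *)
Require Import Defs.
From Stdlib Require Import ZArith Lia Classical.
Open Scope Z_scope.

Ltac dest_units := repeat match goal with
  | H : unit_vec ?d |- _ => unfold unit_vec in H; destruct H as [ -> | [ -> | [ -> | -> ]]] end.

Lemma perp_cases d1 d2 e : unit_vec d1 -> unit_vec d2 -> unit_vec e -> perp d1 d2 ->
  perp e d1 \/ perp e d2.
Proof. intros. dest_units; unfold perp in *; simpl in *; lia. Qed.

Lemma perp_pm a d e : unit_vec a -> unit_vec d -> unit_vec e -> perp a e -> perp d e ->
  a = d \/ a = (- fst d, - snd d).
Proof. intros. dest_units; cbv in *; first [discriminate | left; reflexivity | right; reflexivity]. Qed.

Lemma perp_pm' a b d1 d2 : unit_vec a -> unit_vec b -> unit_vec d1 -> unit_vec d2 ->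
  perp a b -> perp d1 d2 -> a = (- fst d1, - snd d1) ->
  b = d2 \/ b = (- fst d2, - snd d2).
Proof. intros. dest_units; cbv in *; first [discriminate | left; reflexivity | right; reflexivity]. Qed.

Lemma perp_sym a b : perp a b -> perp b a.
Proof. unfold perp; nia. Qed.

Lemma unit_opp d : unit_vec d -> unit_vec (- fst d, - snd d).
Proof. intros. dest_units; cbv; tauto. Qed.

Lemma padd_inj u a b : padd u a = padd u b -> a = b.
Proof. destruct u, a, b; unfold padd; simpl; intro H; injection H; intros; f_equal; lia. Qed.

Lemma padd_opp u a : padd (padd u a) (- fst a, - snd a) = u.
Proof. destruct u, a; unfold padd; simpl; f_equal; lia. Qed.

Lemma cadj_sym R a b : cadj R a b -> cadj R b a.
Proof.
  intros [Ca [Cb [d [Ud ->]]]]. split; [exact Cb|]. split; [exact Ca|].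
  exists (- fst d, - snd d). split; [apply unit_opp; auto| symmetry; apply padd_opp].
Qed.

Lemma bad_nbr_info R c b : bad_nbr R c b -> cadj R c b /\ opp_type R c b.
Proof.
  intros [_ [b' [H|H]]]; destruct H as [d1 [d2 H]]; intuition.
Qed.

Lemma pcadj_sym R a b : pcadj R a b -> pcadj R b a.
Proof. unfold pcadj; tauto. Qed.

Lemma pcadj_info R a b : pcadj R a b ->
  crossing R a /\ crossing R b /\ xover R a <> xover R b /\
  exists d, unit_vec d /\ b = padd a d.
Proof.
  intros [_ [_ [H _]]]. destruct (bad_nbr_info _ _ _ H) as [[Ca [Cb Hd]] Ho].
  unfold opp_type in Ho. tauto.
Qed.

Lemma bad_nbr_intro R c b : problem R c -> cadj R c b -> opp_type R c b -> bad_nbr R c b.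
Proof.
  intros Pc Ccb Ocb. split; [exact Pc|].
  destruct Pc as [Cc [b1 [b2 [d1 [d2 [U1 [U2 [Pp [E1 [E2 [A1 [A2 [O1 O2]]]]]]]]]]]]].
  pose proof Ccb as Ccb'.
  destruct Ccb' as [C1 [C2 [d [Ud Eb]]]].
  destruct (perp_cases d1 d2 d U1 U2 Ud Pp) as [Hp|Hp].
  - exists b1. right. exists d1, d. pose proof (perp_sym _ _ Hp). tauto.
  - exists b2. left. exists d, d2. tauto.
Qed.

Lemma pcadj_intro R a b : problem R a -> problem R b -> cadj R a b -> opp_type R a b ->
  pcadj R a b.
Proof.
  intros. split; [auto|]. split; [auto|]. split.
  - apply bad_nbr_intro; auto.
  - apply bad_nbr_intro; auto. apply cadj_sym; auto.
    unfold opp_type in *; auto.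
Qed.

Lemma celtic_pts R q0 q1 q2 q3 :
  q1 = padd q0 (1,0) -> q2 = padd q0 (1,1) -> q3 = padd q0 (0,1) ->
  crossing R q0 -> crossing R q1 -> crossing R q2 -> crossing R q3 ->
  opp_type R q0 q1 -> opp_type R q1 q2 -> opp_type R q2 q3 -> opp_type R q3 q0 ->
  celtic R.
Proof. intros -> -> ->. intros. exists q0. simpl. tauto. Qed.

Ltac pteq := unfold padd; simpl; f_equal; lia.

Lemma celtic_C R v d e : unit_vec d -> unit_vec e -> perp d e ->
  crossing R v -> crossing R (padd v d) -> crossing R (padd v e) ->
  crossing R (padd (padd v e) d) ->
  xover R v <> xover R (padd v d) -> xover R v <> xover R (padd v e) ->
  xover R (padd v e) <> xover R (padd (padd v e) d) -> celtic R.
Proof.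
  intros Ud Ue Pde C0 C1 C2 C3 X1 X2 X3.
  assert (X4 : xover R (padd v d) <> xover R (padd (padd v e) d)).
  { destruct (xover R v), (xover R (padd v d)), (xover R (padd v e)),
      (xover R (padd (padd v e) d)); congruence. }
  assert (Y1 : opp_type R v (padd v d)) by exact X1.
  assert (Y2 : opp_type R (padd v d) v) by (intro; apply X1; auto).
  assert (Y3 : opp_type R v (padd v e)) by exact X2.
  assert (Y4 : opp_type R (padd v e) v) by (intro; apply X2; auto).
  assert (Y5 : opp_type R (padd v e) (padd (padd v e) d)) by exact X3.
  assert (Y6 : opp_type R (padd (padd v e) d) (padd v e)) by (intro; apply X3; auto).
  assert (Y7 : opp_type R (padd v d) (padd (padd v e) d)) by exact X4.
  assert (Y8 : opp_type R (padd (padd v e) d) (padd v d)) by (intro; apply X4; auto).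
  clear X1 X2 X3 X4.
  destruct v as [x y]. dest_units; try (exfalso; cbv in Pde; discriminate);
  match goal with
  | H0 : crossing R ?a, H1 : crossing R ?b, H2 : crossing R ?c, H3 : crossing R ?d' |- _ =>
      apply (celtic_pts R a b c d'); try assumption; pteq
  end.
Qed.

Lemma K R v d e : unit_vec d -> unit_vec e -> perp d e ->
  pcadj R v (padd v e) -> pcadj R v (padd v d) -> pcadj R v (padd v (- fst d, - snd d)) ->
  celtic R.
Proof.
  intros Ud Ue Pde H1 H2 H3.
  destruct (pcadj_info _ _ _ H1) as [C0 [Ce [Xe _]]].
  destruct (pcadj_info _ _ _ H2) as [_ [Cd [Xd _]]].
  destruct (pcadj_info _ _ _ H3) as [_ [Cd' [Xd' _]]].
  destruct H1 as [_ [Pu _]].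
  destruct Pu as [_ [b1 [b2 [a1 [a2 [U1 [U2 [Pp [E1 [E2 [A1 [A2 [O1 O2]]]]]]]]]]]]].
  assert (Hcase : exists a, unit_vec a /\ perp a e /\ crossing R (padd (padd v e) a) /\
            opp_type R (padd v e) (padd (padd v e) a)).
  { destruct (perp_cases a1 a2 e U1 U2 Ue Pp) as [Hp|Hp].
    - exists a1. destruct A1 as [_ [Cb _]]. subst. repeat split; auto. apply perp_sym; auto.
    - exists a2. destruct A2 as [_ [Cb _]]. subst. repeat split; auto. apply perp_sym; auto. }
  destruct Hcase as [a [Ua [Pae [Ca Oa]]]].
  destruct (perp_pm a d e Ua Ud Ue Pae Pde) as [->| ->].
  - exact (celtic_C R v d e Ud Ue Pde C0 Cd Ce Ca Xd Xe Oa).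
  - refine (celtic_C R v _ e (unit_opp d Ud) Ue _ C0 Cd' Ce Ca Xd' Xe Oa).
    unfold perp in *; simpl; lia.
Qed.

Lemma stair R v d1 d2 : ~ celtic R -> unit_vec d1 -> unit_vec d2 -> perp d1 d2 ->
  pcadj R v (padd v d1) -> pcadj R v (padd v d2) -> pc_corner R (padd v d1) ->
  pcadj R (padd v d1) (padd (padd v d1) (- fst d2, - snd d2)).
Proof.
  intros Nc U1 U2 P12 H1 H2 [a [b [Ua [Ub [Pab [Ha [Hb Hall]]]]]]].
  set (u := padd v d1) in *.
  assert (Hv : padd u (- fst d1, - snd d1) = v) by apply padd_opp.
  destruct (pcadj_info _ _ _ H1) as [C0 [Cu [X1 _]]].
  destruct (pcadj_info _ _ _ H2) as [_ [C2 [X2 _]]].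
  destruct (Hall v (pcadj_sym _ _ _ H1)) as [E|E]; rewrite <- Hv in E;
    apply padd_inj in E.
  - destruct (perp_pm' a b d1 d2 Ua Ub U1 U2 Pab P12 (eq_sym E)) as [Eb|Eb];
      rewrite Eb in Hb; [|exact Hb].
    exfalso; apply Nc.
    destruct (pcadj_info _ _ _ Hb) as [_ [C3 [X3 _]]].
    apply (celtic_C R v d2 d1 U2 U1 (perp_sym _ _ P12) C0 C2 Cu C3 X2 X1 X3).
  - destruct (perp_pm' b a d1 d2 Ub Ua U1 U2 (perp_sym _ _ Pab) P12 (eq_sym E)) as [Eb|Eb];
      rewrite Eb in Ha; [|exact Ha].
    exfalso; apply Nc.
    destruct (pcadj_info _ _ _ Ha) as [_ [C3 [X3 _]]].
    apply (celtic_C R v d2 d1 U2 U1 (perp_sym _ _ P12) C0 C2 Cu C3 X2 X1 X3).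
Qed.

Lemma max_idx (g : nat -> Z) n : exists i, (i <= n)%nat /\ forall j, (j <= n)%nat -> g j <= g i.
Proof.
  induction n as [|n [i [Hi IH]]].
  - exists 0%nat. split; [lia|]. intros j Hj. assert (j = 0%nat) by lia. subst; lia.
  - destruct (Z_le_gt_dec (g (S n)) (g i)).
    + exists i. split; [lia|]. intros j Hj.
      destruct (Nat.eq_dec j (S n)); [subst; lia| apply IH; lia].
    + exists (S n). split; [lia|]. intros j Hj.
      destruct (Nat.eq_dec j (S n)); [subst; lia|]. specialize (IH j ltac:(lia)); lia.
Qed.

Theorem lemma3p8 (R : lattice_diagram) :
  (forall a b : pt, problem R a -> problem R b -> cadj R a b -> ~ pcadj R a b ->
     ~ bad_nbr R a b /\ ~ bad_nbr R b a /\ xover R a = xover R b) /\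
  (~ celtic R ->
     pc_maxdeg2 R /\ pc_deleted_square_free R /\
     (forall (k : nat) (f : nat -> pt), pc_cycle_component R k f ->
        exists i, (i < k)%nat /\ ~ pc_corner R (f i))).
Proof.
  split.
  - intros a b Pa Pb Cab Hn.
    assert (A1 : ~ bad_nbr R a b).
    { intro Hb. apply Hn. destruct (bad_nbr_info _ _ _ Hb) as [_ Ho].
      apply pcadj_intro; auto. }
    assert (A2 : ~ bad_nbr R b a).
    { intro Hb. apply Hn. destruct (bad_nbr_info _ _ _ Hb) as [_ Ho].
      apply pcadj_sym. apply pcadj_intro; auto. apply cadj_sym; auto. }
    split; [exact A1|]. split; [exact A2|].
    destruct (Bool.bool_dec (xover R a) (xover R b)) as [E|E]; [exact E|].
    exfalso; apply A1; apply bad_nbr_intro; auto.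
  - intros Nc. split; [|split].
    + intros v u1 u2 u3 H1 H2 H3.
      destruct (pcadj_info _ _ _ H1) as [_ [_ [_ [d1 [U1 ->]]]]].
      destruct (pcadj_info _ _ _ H2) as [_ [_ [_ [d2 [U2 ->]]]]].
      destruct (pcadj_info _ _ _ H3) as [_ [_ [_ [d3 [U3 ->]]]]].
      dest_units; first [left; reflexivity | right; left; reflexivity
        | right; right; reflexivity | exfalso; apply Nc;
        match goal with
        | Ha : pcadj R v (padd v ?e), Hb : pcadj R v (padd v ?d),
          Hc : pcadj R v (padd v ?d') |- _ =>
          apply (K R v d e); [unfold unit_vec; tauto | unfold unit_vec; tauto
                             | unfold perp; reflexivity | exact Ha | exact Hb | exact Hc]
        end].
    + intros p; simpl; intros Hp.
      destruct Hp as [[H1 [H2 H3]]|[[H1 [H2 H3]]|[[H1 [H2 H3]]|[H1 [H2 H3]]]]];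
      apply Nc; exists p; simpl;
      repeat match goal with H : pcadj _ _ _ |- _ =>
        destruct (pcadj_info _ _ _ H) as [? [? [? _]]]; clear H end;
      unfold opp_type;
      repeat match goal with |- _ /\ _ => split end; try assumption;
      repeat match goal with H : xover _ _ <> xover _ _ |- _ => revert H end;
      repeat match goal with |- context [xover R ?q] =>
        generalize (xover R q) end; intros;
      repeat match goal with b : bool |- _ => destruct b end; congruence.
    + intros k f [Hk [Hinj [Hprob [Hnext [Hclos Hedge]]]]].
      destruct (classic (exists i, (i < k)%nat /\ ~ pc_corner R (f i))) as [Hc|Hc];
        [exact Hc|exfalso].
      assert (Hall : forall i, (i < k)%nat -> pc_corner R (f i)).
      { intros i Hi. apply NNPP. intro Hn. apply Hc. exists i; auto. }
      destruct (max_idx (fun j => 2 * fst (f j) + snd (f j)) (k - 1)) as [i [Hi Hmax]].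
      assert (Hik : (i < k)%nat) by lia.
      destruct (Hall i Hik) as [d1 [d2 [U1 [U2 [P12 [Ha [Hb _]]]]]]].
      destruct (Hclos i _ Hik Ha) as [j1 [Hj1 E1]].
      destruct (Hclos i _ Hik Hb) as [j2 [Hj2 E2]].
      pose proof (stair R (f i) d1 d2 Nc U1 U2 P12 Ha Hb) as S1.
      pose proof (stair R (f i) d2 d1 Nc U2 U1 (perp_sym _ _ P12) Hb Ha) as S2.
      rewrite E1 in S1. rewrite E2 in S2.
      specialize (S1 (Hall j1 Hj1)). specialize (S2 (Hall j2 Hj2)).
      rewrite <- E1 in S1. rewrite <- E2 in S2.
      rewrite E1 in S1 at 1. rewrite E2 in S2 at 1.
      destruct (Hclos j1 _ Hj1 S1) as [j3 [Hj3 E3]].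
      destruct (Hclos j2 _ Hj2 S2) as [j4 [Hj4 E4]].
      pose proof (Hmax j3 ltac:(lia)) as M3.
      pose proof (Hmax j4 ltac:(lia)) as M4.
      cbv beta in M3, M4. rewrite <- E3 in M3. rewrite <- E4 in M4.
      destruct (f i) as [x y].
      dest_units; unfold padd, perp in *; cbn [fst snd] in *; lia.
Qed.
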